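(* Let $z\ge1$ be an integer and $0<\overline\delta\le\tfrac12$. Consider the perfect binary tree of depth $z-1$: its nodes at depth $y\in\{0,\dots,z-1\}$ are the binary strings $v=(j_1,\dots,j_y)$ (the root is the empty string), and the ancestors of $v$ are its prefixes. Let $(B_v)_v$ be independent $\{0,1\}$-valued random variables with $\Pr(B_v=1)\le\overline\delta^{\,2^{z-y(v)}}$, where $y(v)$ is the depth of $v$. Define $X_v=2$ if $B_u=1$ for some strict ancestor $u$ of $v$; $X_v=1$ if $B_u=0$ for all strict ancestors $u$ of $v$ and $B_v=1$; and $X_v=0$ otherwise. For a set $\overline T$ of nodes define its node weight $W(\overline T)$ as the number of leaves (nodes of depth $z-1$) having an ancestor-or-self in $\overline T$. Let $\overline T$ be a set of nodes no two distinct elements of which are in ancestor/descendant relation. Then $$\Pr\bigl(X_v\in\{1,2\}\ \text{for all }v\in\overline T\bigr)\le4\cdot4^{|\overline T|}\,\overline\delta^{\,2W(\overline T)}.$$ In particular, if $\overline T$ consists of leaves only, then $$\Pr\bigl(X_v\in\{1,2\}\ \text{for all }v\in\overline T\bigr)\le(2\overline\delta)^{2|\overline T|}.$$ *)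

(* Defs.v *)
From HB Require Import structures.
From mathcomp Require Import all_boot all_order all_algebra.
Set Implicit Arguments. Unset Strict Implicit. Unset Printing Implicit Defensive.
Import Order.TTheory GRing.Theory Num.Theory.
Local Open Scope ring_scope.

(* Nodes of the perfect binary tree of depth z-1: binary strings of
   length y in {0,...,z-1}, packaged as a dependent pair (y, y-tuple). *)
Definition node (z : nat) := {y : 'I_z & (nat_of_ord y).-tuple bool}.

Definition str (z : nat) (v : node z) : seq bool := tval (tagged v).

Definition depth (z : nat) (v : node z) : nat := nat_of_ord (tag v).

Definition anc_eq (z : nat) (u v : node z) : bool := prefix (str u) (str v).

Definition sanc (z : nat) (u v : node z) : bool :=
  anc_eq u v && (depth u < depth v)%N.

Definition Xv (z : nat) (b : {ffun node z -> bool}) (v : node z) : nat :=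
  if [exists u, sanc u v && b u] then 2%N
  else if b v then 1%N else 0%N.

(* probability of an event under independent Bernoulli(p v) variables B_v:
   the joint law is the product measure on {ffun node z -> bool}. *)
Definition Pr (R : realFieldType) (z : nat) (p : node z -> R)
    (E : pred {ffun node z -> bool}) : R :=
  \sum_(b : {ffun node z -> bool} | E b)
     \prod_(v : node z) (if b v then p v else 1 - p v).

Definition is_leaf (z : nat) (v : node z) : bool := depth v == z.-1.

Definition Wt (z : nat) (T : {set node z}) : nat :=
  #|[set l : node z | is_leaf l && [exists t in T, anc_eq t l]]|.

Definition antichain (z : nat) (T : {set node z}) : Prop :=
  forall u v, u \in T -> v \in T -> u != v -> ~~ anc_eq u v.

(* Main.v *)
Require Import Defs.
From HB Require Import structures.
From mathcomp Require Import all_boot all_order all_algebra.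
Import Order.TTheory GRing.Theory Num.Theory.
Local Open Scope ring_scope.
From mathcomp Require Import zify ring lra.

Module Aux.
Set Implicit Arguments. Unset Strict Implicit.


Section Tree.
Variable z : nat.
Implicit Types u v w t : node z.

Definition mk (s : seq bool) (H : (size s < z)%N) : node z :=
  existT (fun y : 'I_z => (nat_of_ord y).-tuple bool) (Ordinal H)
    (@Tuple (size s) bool s (eqxx _)).

Lemma str_mk s H : str (@mk s H) = s. Proof. by []. Qed.

Lemma depth_str v : depth v = size (str v).
Proof. by case: v => y t; rewrite /depth /str /= size_tuple. Qed.

Lemma depth_lt v : (depth v < z)%N.
Proof. by case: v => y t; rewrite /depth /=. Qed.

Lemma str_inj : injective (@str z).
Proof.
case=> [y t] [y' t']; rewrite /str /= => E.
have Eyy : y = y'.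
  by apply: val_inj; rewrite /= -(size_tuple t) -(size_tuple t') E.
subst y'. by have -> : t = t' by apply: val_inj.
Qed.

Lemma prefix_size (s t : seq bool) : prefix s t -> (size s <= size t)%N.
Proof. by move=> /prefixP [r ->]; rewrite size_cat leq_addr. Qed.

Lemma prefix_eq (s t : seq bool) : prefix s t -> (size t <= size s)%N -> s = t.
Proof.
move=> /prefixP [r ->]; rewrite size_cat -[X in (_ <= X)%N]addn0 leq_add2l leqn0.
by move=> /nilP ->; rewrite cats0.
Qed.

Lemma prefix_comp (s r t : seq bool) : prefix s t -> prefix r t ->
  prefix s r || prefix r s.
Proof.
rewrite !prefixE => /eqP Es /eqP Er.
case: (leqP (size s) (size r)) => H.
  by apply/orP; left; rewrite -[r in take _ r]Er take_takel // Es.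
by apply/orP; right; rewrite -[s in take _ s]Es take_takel ?Er // ltnW.
Qed.

Lemma prefix_rconsE (s t : seq bool) x : prefix s (rcons t x) ->
  s = rcons t x \/ prefix s t.
Proof.
move=> P. have := prefix_size P; rewrite size_rcons leq_eqVlt => /orP[/eqP E|H].
  by left; apply: prefix_eq => //; rewrite size_rcons E.
right; move: P; rewrite !prefixE -cats1 takel_cat //.
Qed.

Lemma prefix_ext (s t : seq bool) : prefix s t -> (size s < size t)%N ->
  exists x, prefix (rcons s x) t.
Proof.
rewrite prefixE => /eqP Es H; exists (nth false t (size s)).
by rewrite prefixE size_rcons (take_nth false H) Es eqxx.
Qed.

Lemma anc_refl v : anc_eq v v. Proof. exact: prefix_refl. Qed.
Lemma anc_trans u v w : anc_eq u v -> anc_eq v w -> anc_eq u w.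
Proof. exact: prefix_trans. Qed.
Lemma anc_depth u v : anc_eq u v -> (depth u <= depth v)%N.
Proof. by rewrite !depth_str; apply: prefix_size. Qed.
Lemma anc_eqd u v : anc_eq u v -> (depth v <= depth u)%N -> u = v.
Proof. by rewrite !depth_str => P H; apply: str_inj; apply: prefix_eq. Qed.

End Tree.



Section Prob.
Variables (R : realFieldType) (z : nat) (p : node z -> R).
Hypothesis p0 : forall v, 0 <= p v.
Hypothesis p1 : forall v, p v <= 1.

Definition wt (b : {ffun node z -> bool}) :=
  \prod_(v : node z) (if b v then p v else 1 - p v).

Lemma wt_ge0 b : 0 <= wt b.
Proof.
apply: prodr_ge0 => v _; case: (b v) => //; rewrite subr_ge0 //.
Qed.

Lemma Pr_ge0 (E : pred {ffun node z -> bool}) : 0 <= Pr p E.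
Proof. by apply: sumr_ge0 => b _; apply: wt_ge0. Qed.

Lemma Pr_mono (E F : pred {ffun node z -> bool}) :
  (forall b, E b -> F b) -> Pr p E <= Pr p F.
Proof.
move=> EF; rewrite /Pr [X in _ <= X]big_mkcond [X in X <= _]big_mkcond.
apply: ler_sum => b _; case Eb: (E b); first by rewrite (EF _ Eb).
by case: (F b) => //; apply: wt_ge0.
Qed.

Lemma Pr_union (E F : pred {ffun node z -> bool}) :
  Pr p (fun b => E b || F b) <= Pr p E + Pr p F.
Proof.
rewrite /Pr (big_mkcond E) (big_mkcond F) (big_mkcond (fun b => E b || F b)) -big_split /=.
apply: ler_sum => b _; case: (E b); case: (F b) => /=;
  rewrite ?addr0 ?add0r ?lerDl ?lexx //; apply: wt_ge0.
Qed.

Lemma Pr_true : Pr p (fun _ => true) = 1.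
Proof.
rewrite /Pr -(bigA_distr_bigA (fun v (x : bool) => if x then p v else 1 - p v)).
apply: big1 => v _; rewrite big_bool /=; ring.
Qed.

Lemma Pr_le1 E : Pr p E <= 1.
Proof. by rewrite -Pr_true; apply: Pr_mono. Qed.

Definition flip (b : {ffun node z -> bool}) i :=
  [ffun j => if j == i then ~~ b j else b j].

Lemma flipK i : involutive (flip^~ i).
Proof.
move=> b; apply/ffunP => j; rewrite /flip !ffunE; case: eqP => // ->.
by rewrite negbK.
Qed.

Lemma wt_flip (b : {ffun node z -> bool}) i : b i -> (1 - p i) * wt b = p i * wt (flip b i).
Proof.
move=> bi; rewrite /wt (bigD1 i) // [in RHS](bigD1 i) //= ffunE eqxx bi /=.
have -> : \prod_(j | j != i) (if flip b i j then p j else 1 - p j) =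
          \prod_(j | j != i) (if b j then p j else 1 - p j).
  by apply: eq_bigr => j /negbTE ji; rewrite ffunE ji.
ring.
Qed.

Lemma Pr_indep (E : pred {ffun node z -> bool}) i :
  (forall b, E (flip b i) = E b) -> Pr p (fun b => E b && b i) = p i * Pr p E.
Proof.
move=> Ef.
have S : forall P, Pr p P = \sum_(b | P b) wt b by [].
rewrite !S [in RHS](bigID (fun b : {ffun node z -> bool} => b i)) /=.
have -> : \sum_(b | E b && ~~ b i) wt b = \sum_(b | E b && b i) wt (flip b i).
  rewrite [RHS](reindex_inj (can_inj (flipK i))) /=.
  apply: eq_big => [b|b _]; last by rewrite flipK.
  by rewrite Ef ffunE eqxx.
rewrite mulrDr [in X in _ = _ + X]mulr_sumr.
under [X in _ = _ + X]eq_bigr => b /andP[_ bi] do rewrite -(wt_flip bi).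
rewrite -mulr_sumr; ring.
Qed.

Lemma Pr_single i : Pr p (fun b => b i) = p i.
Proof.
have := @Pr_indep (fun _ => true) i (fun _ => erefl); rewrite Pr_true mulr1.
by move=> <-.
Qed.

End Prob.



Section Tree2.
Variable z : nat.
Implicit Types u v w t : node z.

Definition Lv v := #|[set l : node z | is_leaf l && anc_eq v l]|.

Lemma nth_pref v l j : anc_eq v l -> (j < depth v)%N ->
  nth false (str l) j = nth false (str v) j.
Proof.
rewrite /anc_eq prefixE depth_str => /eqP E H.
by rewrite -[in RHS]E nth_take.
Qed.

Lemma Lv_bound v : (Lv v <= 2 ^ (z.-1 - depth v))%N.
Proof.
pose k := (z.-1 - depth v)%N.
pose f := fun l : node z => [ffun i : 'I_k => nth false (str l) (depth v + i)].
rewrite /Lv -(card_in_imset (f:=f)).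
  apply: leq_trans (max_card _) _.
  by rewrite card_ffun card_bool card_ord.
move=> l1 l2; rewrite !inE => /andP[L1 A1] /andP[L2 A2] /ffunP E.
have S1 : size (str l1) = z.-1 by rewrite -depth_str; apply/eqP.
have S2 : size (str l2) = z.-1 by rewrite -depth_str; apply/eqP.
have dv : (depth v <= z.-1)%N by rewrite -S1 -depth_str; apply: anc_depth.
apply: str_inj; apply: (@eq_from_nth _ false); first by rewrite S1 S2.
move=> j; rewrite S1 => jz.
case: (ltnP j (depth v)) => jd; first by rewrite !(nth_pref _ jd).
have ik : (j - depth v < k)%N by rewrite /k; lia.
have := E (Ordinal ik); rewrite !ffunE /=.
by have -> : (depth v + (j - depth v) = j)%N by lia.
Qed.

Lemma Wt0 : Wt (set0 : {set node z}) = 0%N.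
Proof.
apply/eqP; rewrite cards_eq0; apply/eqP/setP => l; rewrite !inE.
by case: (is_leaf l) => //=; apply/negbTE/existsP => -[t]; rewrite inE.
Qed.

Lemma Wt_mono (T T' : {set node z}) :
  (forall t, t \in T -> exists2 t', t' \in T' & anc_eq t' t) -> (Wt T <= Wt T')%N.
Proof.
move=> H; apply: subset_leq_card; apply/subsetP => l; rewrite !inE.
move=> /andP[L /existsP[t /andP[tT A]]]; have [t' t'T A'] := H t tT.
by rewrite L; apply/existsP; exists t'; rewrite t'T (anc_trans A' A).
Qed.

Lemma Wt_D1 (T : {set node z}) x : (Wt T <= Wt (T :\ x) + Lv x)%N.
Proof.
apply: leq_trans (leq_card_setU _ _).1.
apply: subset_leq_card; apply/subsetP => l; rewrite !inE.
move=> /andP[L /existsP[t /andP[tT A]]]; rewrite L /=.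
case: (eqVneq t x) => [<-|tx]; first by rewrite A orbT.
by apply/orP; left; apply/existsP; exists t; rewrite !inE tx tT A.
Qed.

Lemma Wt_leaves (T : {set node z}) : (forall v, v \in T -> is_leaf v) -> (#|T| <= Wt T)%N.
Proof.
move=> H; apply: subset_leq_card; apply/subsetP => t tT; rewrite !inE H //=.
by apply/existsP; exists t; rewrite tT anc_refl.
Qed.

Lemma Xv_cov b v :
  ((Xv b v == 1%N) || (Xv b v == 2%N)) = [exists u, anc_eq u v && b u].
Proof.
rewrite /Xv; case: ifP => [/existsP[u /andP[/andP[A _] bu]] | N].
  by apply/esym/existsP; exists u; rewrite A bu.
case bv: (b v) => /=.
  by apply/esym/existsP; exists v; rewrite anc_refl bv.
apply/esym/negbTE/existsP => -[u /andP[A bu]].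
case: (ltnP (depth u) (depth v)) => H.
  by move: N => /negbT /existsP; apply; exists u; rewrite /sanc A H bu.
by move: bu; rewrite (anc_eqd A H) bv.
Qed.

End Tree2.



Section Arith.
Variables (R : realFieldType) (delta : R).
Hypotheses (d0 : 0 < delta) (d1 : delta <= 2^-1).

Lemma dle1 : delta <= 1. Proof. move: d1 d0; lra. Qed.
Lemma dge0 : 0 <= delta. Proof. move: d1 d0; lra. Qed.

Lemma dexp m n : (m <= n)%N -> delta ^+ n <= delta ^+ m.
Proof. by move=> H; apply: ler_wiXn2l => //; [exact: dge0 | exact: dle1]. Qed.

Lemma fexp m n : (m <= n)%N -> (4 : R) ^+ m <= 4 ^+ n.
Proof. by move=> H; apply: ler_weXn2l => //; lra. Qed.

Lemma dexp_ge0 n : 0 <= delta ^+ n. Proof. by apply: exprn_ge0; exact: dge0. Qed.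
Lemma fexp_ge0 n : 0 <= (4 : R) ^+ n. Proof. by apply: exprn_ge0; lra. Qed.

Lemma arithA (P P1 P2 pv ps : R) (n n1 n2 W W1 W2 L1 L2 : nat) :
  P <= P1 + ps * (pv * P2) ->
  P1 <= 2^-1 * 4 ^+ n1 * delta ^+ (2 * W1) ->
  0 <= P2 -> P2 <= 4 ^+ n2 * delta ^+ (2 * W2) ->
  0 <= pv -> pv <= delta ^+ (2 * L1) ->
  0 <= ps -> ps <= delta ^+ (2 * L2) ->
  (n1.+1 <= n)%N -> (n2.+2 <= n)%N -> (W <= W1)%N -> (W <= W2 + L1 + L2)%N ->
  P <= 2^-1 * 4 ^+ n * delta ^+ (2 * W).
Proof.
move=> HP HP1 P20 HP2 pv0 Hpv ps0 Hps n1n n2n WW1 WW2.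
have X0 := dexp_ge0 (2 * W).
have F1 : 4 * 4 ^+ n1 <= (4 : R) ^+ n by rewrite -exprS; apply: fexp.
have F2 : 16 * 4 ^+ n2 <= (4 : R) ^+ n.
  have -> : (16 : R) * 4 ^+ n2 = 4 ^+ n2.+2 by rewrite !exprS; ring.
  exact: fexp.
have E1 : delta ^+ (2 * W1) <= delta ^+ (2 * W) by apply: dexp; clear -WW1; lia.
have E2 : ps * (pv * P2) <= 4 ^+ n2 * delta ^+ (2 * W).
  apply: le_trans (_ : delta ^+ (2 * L2) * (delta ^+ (2 * L1) *
      (4 ^+ n2 * delta ^+ (2 * W2))) <= _).
    apply: ler_pM => //; first by apply: mulr_ge0.
    by apply: ler_pM.
  have -> : delta ^+ (2 * L2) * (delta ^+ (2 * L1) * (4 ^+ n2 * delta ^+ (2 * W2)))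
     = 4 ^+ n2 * delta ^+ (2 * L2 + 2 * L1 + 2 * W2) by rewrite !exprD; ring.
  apply: ler_wpM2l; first exact: fexp_ge0.
  by apply: dexp; clear -WW2; lia.
have G1 : P1 <= 2^-1 * (4 ^+ n1 * delta ^+ (2 * W)).
  apply: le_trans HP1 _; rewrite -mulrA; apply: ler_wpM2l; first lra.
  by apply: ler_wpM2l; [exact: fexp_ge0 | exact: E1].
have F1' : 4 * (4 ^+ n1 * delta ^+ (2 * W)) <= 4 ^+ n * delta ^+ (2 * W).
  by rewrite mulrA; apply: ler_wpM2r.
have F2' : 16 * (4 ^+ n2 * delta ^+ (2 * W)) <= 4 ^+ n * delta ^+ (2 * W).
  by rewrite mulrA; apply: ler_wpM2r.
have H0 : 0 <= 4 ^+ n1 * delta ^+ (2 * W) by apply: mulr_ge0 => //; exact: fexp_ge0.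
rewrite -mulrA.
move: HP G1 E2 F1' F2' H0.
set A := 4 ^+ n1 * _; set B := 4 ^+ n2 * _; set C := 4 ^+ n * _.
set t := ps * _.
lra.
Qed.

Lemma arithB (P P1 P2 pv : R) (n n1 n2 W W1 W2 L1 : nat) :
  P <= P1 + pv * P2 ->
  P1 <= 2^-1 * 4 ^+ n1 * delta ^+ (2 * W1) ->
  0 <= P2 -> P2 <= 4 ^+ n2 * delta ^+ (2 * W2) ->
  0 <= pv -> pv <= delta ^+ (2 * L1) ->
  (n1 <= n)%N -> (n2.+1 <= n)%N -> (W < W1)%N -> (W <= W2 + L1)%N ->
  P <= 2^-1 * 4 ^+ n * delta ^+ (2 * W).
Proof.
have e0 := d0; have e1 := d1.
move=> HP HP1 P20 HP2 pv0 Hpv n1n n2n WW1 WW2.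
have X0 := dexp_ge0 (2 * W).
have F1 : 4 ^+ n1 <= (4 : R) ^+ n by apply: fexp.
have F2 : 4 * 4 ^+ n2 <= (4 : R) ^+ n by rewrite -exprS; apply: fexp.
have dd : delta * delta <= 4^-1.
  have : delta * delta <= 2^-1 * 2^-1 by apply: ler_pM => //; exact: dge0.
  have -> : (2^-1 * 2^-1 : R) = 4^-1 by rewrite -invfM; congr (_^-1); rewrite -natrM.
  by [].
have E1 : 4 * delta ^+ (2 * W1) <= delta ^+ (2 * W).
  have -> : (2 * W1 = (2 * W + 2) + (2 * W1 - (2 * W + 2)))%N by rewrite subnKC // -mulnSr leq_mul2l.
  rewrite exprD.
  apply: le_trans (_ : 4 * delta ^+ (2 * W + 2) <= _).
    rewrite ler_pM2l ?ltr0n //; rewrite -[X in _ <= X]mulr1; apply: ler_wpM2l.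
      exact: dexp_ge0.
    by have := dexp (leq0n (2 * W1 - (2 * W + 2))); rewrite expr0.
  rewrite exprD expr2 mulrCA.
  rewrite -[X in _ <= X]mulr1; apply: ler_wpM2l => //.
  have : 4 * (delta * delta) <= 4 * 4^-1 by rewrite ler_pM2l ?ltr0n.
  by rewrite mulfV // pnatr_eq0.
have E2 : pv * P2 <= 4 ^+ n2 * delta ^+ (2 * W).
  apply: le_trans (_ : delta ^+ (2 * L1) * (4 ^+ n2 * delta ^+ (2 * W2)) <= _).
    by apply: ler_pM.
  have -> : delta ^+ (2 * L1) * (4 ^+ n2 * delta ^+ (2 * W2))
     = 4 ^+ n2 * delta ^+ (2 * L1 + 2 * W2) by rewrite !exprD; ring.
  apply: ler_wpM2l; first exact: fexp_ge0.
  by apply: dexp; clear -WW2; lia.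
have G1 : 4 * P1 <= 2^-1 * (4 ^+ n1 * delta ^+ (2 * W)).
  have H4 : 0 <= 2^-1 * (4 : R) ^+ n1 by apply: mulr_ge0; [lra | exact: fexp_ge0].
  have : 4 * P1 <= 4 * (2^-1 * 4 ^+ n1 * delta ^+ (2 * W1)) by rewrite ler_pM2l ?ltr0n.
  move=> H; apply: le_trans H _.
  have -> : 4 * (2^-1 * 4 ^+ n1 * delta ^+ (2 * W1)) =
     2^-1 * (4 ^+ n1 * (4 * delta ^+ (2 * W1))) by ring.
  apply: ler_wpM2l; first lra.
  by apply: ler_wpM2l; [exact: fexp_ge0 | exact: E1].
have F1' : 4 ^+ n1 * delta ^+ (2 * W) <= 4 ^+ n * delta ^+ (2 * W).
  by apply: ler_wpM2r.
have F2' : 4 * (4 ^+ n2 * delta ^+ (2 * W)) <= 4 ^+ n * delta ^+ (2 * W).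
  by rewrite mulrA; apply: ler_wpM2r.
have H0 : 0 <= 4 ^+ n * delta ^+ (2 * W) by apply: mulr_ge0 => //; exact: fexp_ge0.
rewrite -mulrA.
move: HP G1 E2 F1' F2' H0.
set A := 4 ^+ n1 * _; set B := 4 ^+ n2 * _; set C := 4 ^+ n * _.
set t := pv * _.
lra.
Qed.

End Arith.



Section Main.
Variables (R : realFieldType) (z : nat) (delta : R) (p : node z -> R).
Hypotheses (d0 : 0 < delta) (d1 : delta <= 2^-1).
Hypothesis p0 : forall v, 0 <= p v.
Hypothesis pb : forall v, p v <= delta ^+ (2 ^ (z - depth v)).

Lemma p1 v : p v <= 1.
Proof.
apply: le_trans (pb v) _.
by have := dexp d0 d1 (leq0n (2 ^ (z - depth v))); rewrite expr0.
Qed.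

Lemma pv_bound v : p v <= delta ^+ (2 * Lv v).
Proof.
apply: le_trans (pb v) _; apply: (dexp d0 d1).
have := Lv_bound v; have := depth_lt v.
move: (Lv v) (depth v) => L d dz HL.
have -> : (z - d = (z.-1 - d).+1)%N.
  by case: z dz => // n; rewrite ltnS => dn /=; rewrite subSn.
by rewrite expnS leq_mul2l.
Qed.

Definition cov (T : {set node z}) (b : {ffun node z -> bool}) :=
  [forall t in T, [exists u, anc_eq u t && b u]].

Lemma cov_flip (X : {set node z}) x b :
  (forall t, t \in X -> ~~ anc_eq x t) -> cov X (flip b x) = cov X b.
Proof.
move=> H; apply: eq_forallb_in => t tX; apply: eq_existsb => u.
case A: (anc_eq u t) => //=; rewrite ffunE.
case: eqP => // E; subst u; by move: (H t tX); rewrite A.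
Qed.

Lemma cov_sub (T1 T2 : {set node z}) b : T1 \subset T2 -> cov T2 b -> cov T1 b.
Proof.
move=> /subsetP S /forall_inP H; apply/forall_inP => t tT; exact: H (S _ tT).
Qed.

Lemma sum_sub (A B : {set node z}) (f : node z -> nat) :
  A \subset B -> (\sum_(t in A) f t <= \sum_(t in B) f t)%N.
Proof.
move=> S; rewrite [X in (_ <= X)%N](big_setID A) /=.
by rewrite (setIidPr S) leq_addr.
Qed.

Lemma weaken (T : {set node z}) P :
  P <= (if T == set0 then 1 else 2^-1 * 4 ^+ #|T| * delta ^+ (2 * Wt T)) ->
  P <= 4 ^+ #|T| * delta ^+ (2 * Wt T).
Proof.
case: eqP => [->|_] H; first by rewrite cards0 Wt0 !expr0 mulr1.
apply: le_trans H _; rewrite -mulrA ler_pdivrMl ?ltr0n // ler_peMl //.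
  by apply: mulr_ge0; [exact: fexp_ge0 | exact: dexp_ge0].
lra.
Qed.


Lemma root_case (T : {set node z}) v : v \in T -> depth v = 0%N ->
  (forall t, t \in T -> (depth t <= depth v)%N) ->
  Pr p (cov T) <= 2^-1 * 4 ^+ #|T| * delta ^+ (2 * Wt T).
Proof.
move=> vT Dv vmax.
have Tv : T = [set v].
  apply/setP => t; rewrite inE; apply/idP/eqP => [tT|->//].
  apply/esym/anc_eqd; last exact: vmax.
  by rewrite /anc_eq; move: Dv; rewrite depth_str => /size0nil ->; exact: prefix0s.
have H1 : Pr p (cov T) <= p v.
  rewrite -(Pr_single p).
  apply: (Pr_mono p0 p1) => b /forall_inP /(_ v vT) /existsP [u /andP[A bu]].
  have E : u = v by apply: anc_eqd A _; rewrite Dv.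
  by rewrite -E.
have W1 : (Wt T <= Lv v)%N.
  have := Wt_D1 T v; rewrite {2}Tv setDv Wt0 //.
apply: le_trans H1 _; apply: le_trans (pv_bound v) _.
apply: le_trans (dexp d0 d1 (_ : 2 * Wt T <= 2 * Lv v)%N) _.
  by rewrite leq_mul2l W1 orbT.
rewrite Tv cards1 expr1 -[X in X <= _]mul1r; apply: ler_wpM2r.
  exact: (dexp_ge0 d0 d1).
lra.
Qed.

Section Step.
Variables (T : {set node z}) (v : node z) (su : seq bool) (x : bool).
Hypotheses (AT : antichain T) (vT : v \in T) (Ev : str v = rcons su x)
  (vmax : forall t, t \in T -> (depth t <= depth v)%N)
  (Hu : (size su < z)%N) (Hs : (size (rcons su (~~ x)) < z)%N).
Let u := mk Hu.
Let s := mk Hs.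

Lemma Dv : depth v = (size su).+1.
Proof. by rewrite depth_str Ev size_rcons. Qed.
Lemma Du : depth u = size su.
Proof. by rewrite depth_str str_mk. Qed.
Lemma Ds : depth s = (size su).+1.
Proof. by rewrite depth_str str_mk size_rcons. Qed.
Lemma Au : anc_eq u v.
Proof. by rewrite /anc_eq str_mk Ev prefix_rcons. Qed.
Lemma As : anc_eq u s.
Proof. by rewrite /anc_eq !str_mk prefix_rcons. Qed.
Lemma uv : u != v.
Proof. by apply/eqP => E; have := Dv; rewrite -E Du; exact: n_Sn. Qed.
Lemma sv : s != v.
Proof.
apply/eqP => E; have := congr1 (@str z) E; rewrite str_mk Ev => H; have := @rcons_injr _ su _ _ H; by case: x.
Qed.
Lemma uT : u \notin T.
Proof. by apply/negP => uT; have := AT uT vT uv; rewrite Au. Qed.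

Lemma up_v w : anc_eq w v -> w = v \/ anc_eq w u.
Proof.
rewrite /anc_eq Ev => /prefix_rconsE [E|P]; last by right; rewrite str_mk.
by left; apply: str_inj; rewrite E Ev.
Qed.
Lemma up_s w : anc_eq w s -> w = s \/ anc_eq w u.
Proof.
rewrite /anc_eq str_mk => /prefix_rconsE [E|P]; last by right; rewrite str_mk.
by left; apply: str_inj; rewrite E str_mk.
Qed.
Lemma down_u w : anc_eq u w -> [\/ w = u, anc_eq v w | anc_eq s w].
Proof.
rewrite /anc_eq !str_mk => P.
case: (ltnP (size su) (size (str w))) => H.
  have [y Py] := prefix_ext P H.
  case: (eqVneq y x) => [E|yx]; first by apply: Or32; rewrite Ev -E.
  apply: Or33; have E : ~~ x = y by move: yx; clear Py; case: x; case: y.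
  by rewrite E.
by apply: Or31; apply: str_inj; rewrite str_mk; apply/esym/prefix_eq.
Qed.

Lemma eqv_t t : t \in T -> anc_eq v t -> t = v.
Proof. by move=> tT A; apply/esym/anc_eqd => //; apply: vmax. Qed.
Lemma eqs_t t : t \in T -> anc_eq s t -> t = s.
Proof. by move=> tT A; apply/esym/anc_eqd => //; rewrite Ds -Dv; apply: vmax. Qed.

Definition T2 := T :\ v :\ s.
Definition T1 := u |: T2.

Lemma inT2 t : (t \in T2) = [&& t != s, t != v & t \in T].
Proof. by rewrite !inE. Qed.

Lemma AT1 : antichain T1.
Proof.
move=> a c; rewrite !inE => /orP[/eqP->|/and3P[a1 a2 aT]] /orP[/eqP->|/and3P[c1 c2 cT]] ac.
- by rewrite eqxx in ac.
- apply/negP => A; case: (down_u A) => [E|/(eqv_t cT) E|/(eqs_t cT) E].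
  + by move: uT; rewrite -E cT.
  + by rewrite E eqxx in c2.
  + by rewrite E eqxx in c1.
- apply/negP => A; have := AT aT vT a2; rewrite (anc_trans A Au) //.
- exact: AT.
Qed.

Lemma uT2 : u \notin T2.
Proof. by rewrite inT2 (negbTE uT) !andbF. Qed.

Definition S (X : {set node z}) := (\sum_(t in X) (depth t).+1)%N.

Lemma ST : S T = ((size su).+2 + S (T :\ v))%N.
Proof. by rewrite /S (big_setD1 v vT) Dv. Qed.
Lemma ST2 : (S T2 <= S (T :\ v))%N.
Proof. by apply: sum_sub; apply/subsetP => t; rewrite inE => /andP[]. Qed.
Lemma sum2 : (S T2 < S T)%N.
Proof. by rewrite ST; apply: leq_ltn_trans ST2 _; rewrite -[X in (X < _)%N]add0n ltn_add2r. Qed.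
Lemma sum1 : (S T1 < S T)%N.
Proof.
have ST1 : S T1 = ((size su).+1 + S T2)%N by rewrite /S /T1 big_setU1 ?uT2 //= Du.
move: ST2; rewrite ST1 ST; move: (S T2) (S (T :\ v)) (size su) => a b n h.
by rewrite -(addn2 n) -(addn1 n) -!addnA ltn_add2l add1n add2n !ltnS.
Qed.

Lemma ev_incl b : cov T b ->
  cov T1 b || ((cov T2 b && b v) && ((s \in T) ==> b s)).
Proof.
move=> HT; have HT' := HT; move/forall_inP in HT'.
case: (boolP [exists w, anc_eq w u && b w]) => [Hw|Hw].
  apply/orP; left; apply/forall_inP => t; rewrite in_setU1 => /orP[/eqP->//|tT2].
  by apply: HT'; move: tT2; rewrite inT2 => /and3P[].
apply/orP; right.
rewrite (cov_sub _ HT) /=; last by apply/subsetP => t; rewrite inT2 => /and3P[].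
have [w /andP[A bw]] := existsP (HT' v vT).
case: (up_v A) => [E|Awu]; last by move: Hw => /existsP []; exists w; rewrite Awu bw.
rewrite -E bw /=; apply/implyP => sT.
have [w' /andP[A' bw']] := existsP (HT' s sT).
case: (up_s A') => [E'|Awu]; last by move: Hw => /existsP []; exists w'; rewrite Awu bw'.
by rewrite -E'.
Qed.

Lemma flipv b : cov T2 (flip b v) = cov T2 b.
Proof.
apply: cov_flip => t; rewrite inT2 => /and3P[_ tv tT]; apply/negP => A.
by rewrite (eqv_t tT A) eqxx in tv.
Qed.
Lemma flips b : cov T2 (flip b s) && flip b s v = cov T2 b && b v.
Proof.
rewrite ffunE eq_sym (negbTE sv).
congr (_ && _); apply: cov_flip => t; rewrite inT2 => /and3P[ts _ tT]; apply/negP => A.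
by rewrite (eqs_t tT A) eqxx in ts.
Qed.

Lemma W1ge : (Wt T <= Wt T1)%N.
Proof.
apply: Wt_mono => t tT.
case: (eqVneq t v) => [->|tv]; first by exists u; rewrite ?Au // !inE eqxx.
case: (eqVneq t s) => [->|ts]; first by exists u; rewrite ?As // !inE eqxx.
by exists t; rewrite ?anc_refl // in_setU1 inT2 ts tv tT orbT.
Qed.

Lemma T1n0 : (T1 == set0) = false.
Proof. by apply/negbTE/set0Pn; exists u; rewrite in_setU1 eqxx. Qed.

Lemma cT : #|T| = (#|T :\ v|).+1.
Proof. by rewrite (cardsD1 v T) vT. Qed.
Lemma cT1 : #|T1| = (#|T2|).+1.
Proof. by rewrite /T1 cardsU1 uT2. Qed.

Lemma caseA : s \in T ->
  Pr p (cov T1) <= 2^-1 * 4 ^+ #|T1| * delta ^+ (2 * Wt T1) ->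
  Pr p (cov T2) <= 4 ^+ #|T2| * delta ^+ (2 * Wt T2) ->
  Pr p (cov T) <= 2^-1 * 4 ^+ #|T| * delta ^+ (2 * Wt T).
Proof.
move=> sT H1 H2.
have HP : Pr p (cov T) <= Pr p (cov T1) + p s * (p v * Pr p (cov T2)).
  apply: le_trans (Pr_mono p0 p1 (F := fun b => cov T1 b ||
     ((cov T2 b && b v) && ((s \in T) ==> b s))) (@ev_incl)) _.
  apply: le_trans (Pr_union p0 p1 _ _) _.
  rewrite sT /=.
  rewrite (Pr_indep p (E := fun b => cov T2 b && b v) (i := s) flips).
  by rewrite (Pr_indep p (E := cov T2) (i := v) flipv).
have cTv : #|T :\ v| = (#|T2|).+1.
  by rewrite /T2 (cardsD1 s (T :\ v)) !inE sv sT.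
apply: (arithA d0 d1 HP H1 (Pr_ge0 p0 p1 _) H2 (p0 v) (pv_bound v) (p0 s) (pv_bound s)).
- by rewrite cT cT1 cTv.
- by rewrite cT cTv.
- exact: W1ge.
- apply: leq_trans (Wt_D1 T v) _; rewrite addnAC leq_add2r; exact: Wt_D1.
Qed.

Lemma T2v : s \notin T -> T2 = T :\ v.
Proof.
move=> sT; apply/setP => t; rewrite inT2 !inE.
by case: (eqVneq t s) => // ->; rewrite (negbTE sT) andbF.
Qed.

Lemma Wlt : s \notin T -> (Wt T < Wt T1)%N.
Proof.
move=> sT.
have zp : (0 < z)%N by apply: leq_ltn_trans _ Hs.
have szl : size (rcons su (~~ x) ++ nseq (z.-1 - size (rcons su (~~ x))) false) = z.-1.
  by rewrite size_cat size_nseq subnKC // -ltnS prednK.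
have Hl : (size (rcons su (~~ x) ++ nseq (z.-1 - size (rcons su (~~ x))) false) < z)%N.
  by rewrite szl ltn_predL.
pose l := mk Hl.
have Ll : is_leaf l by rewrite /is_leaf depth_str str_mk szl.
have Asl : anc_eq s l by rewrite /anc_eq !str_mk prefix_prefix.
apply: proper_card; apply/properP; split.
  apply/subsetP => l'; rewrite !inE => /andP[L /existsP[t /andP[tT A]]].
  rewrite L /=; apply/existsP.
  case: (eqVneq t v) => [E|tv].
    by exists u; rewrite in_setU1 eqxx /= (anc_trans Au) // -E.
  case: (eqVneq t s) => [E|ts]; first by move: sT; rewrite -E tT.
  by exists t; rewrite in_setU1 inT2 ts tv tT orbT.
exists l.
  rewrite inE Ll /=; apply/existsP; exists u.
  by rewrite in_setU1 eqxx /= (anc_trans As Asl).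
rewrite inE Ll /=; apply/existsP => -[t /andP[tT A]].
case/orP: (prefix_comp A Asl) => [Ats|Ast].
  case: (up_s Ats) => [E|Atu]; first by move: sT; rewrite -E tT.
  have Atv := anc_trans Atu Au.
  case: (eqVneq t v) => [E|tv].
    move: Atu; rewrite E => /anc_depth; by rewrite Dv Du ltnn.
  by have := AT tT vT tv; rewrite Atv.
by move: sT; rewrite -(eqs_t tT Ast) tT.
Qed.

Lemma caseB : s \notin T ->
  Pr p (cov T1) <= 2^-1 * 4 ^+ #|T1| * delta ^+ (2 * Wt T1) ->
  Pr p (cov T2) <= 4 ^+ #|T2| * delta ^+ (2 * Wt T2) ->
  Pr p (cov T) <= 2^-1 * 4 ^+ #|T| * delta ^+ (2 * Wt T).
Proof.
move=> sT H1 H2.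
have HP : Pr p (cov T) <= Pr p (cov T1) + p v * Pr p (cov T2).
  apply: le_trans (Pr_mono p0 p1 (F := fun b => cov T1 b ||
     (cov T2 b && b v)) _) _.
    by move=> b /ev_incl; rewrite (negbTE sT) andbT.
  apply: le_trans (Pr_union p0 p1 _ _) _.
  by rewrite (Pr_indep p (E := cov T2) (i := v) flipv).
apply: (arithB d0 d1 HP H1 (Pr_ge0 p0 p1 _) H2 (p0 v) (pv_bound v)).
- by rewrite cT cT1 T2v.
- by rewrite cT T2v.
- exact: Wlt.
- by rewrite T2v //; exact: Wt_D1.
Qed.

End Step.

Lemma main_ind k (T : {set node z}) :
  (\sum_(t in T) (depth t).+1 < k)%N -> antichain T ->
  Pr p (cov T) <= (if T == set0 then 1 else 2^-1 * 4 ^+ #|T| * delta ^+ (2 * Wt T)).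
Proof.
elim: k T => [|k IH] T Hk AT; first by rewrite ltn0 in Hk.
case: eqP => [_|/eqP Tn0]; first exact: (Pr_le1 p0 p1).
have [t0 t0T] := set0Pn _ Tn0.
case: (arg_maxnP (fun t => depth t) t0T) => v vT vmax.
have vmax' : forall t, t \in T -> (depth t <= depth v)%N by move=> t tT; apply: vmax.
case Dv: (depth v) => [|d]; first exact: root_case vT Dv vmax'.
case E: (str v) => [|y r]; first by move: Dv; rewrite depth_str E.
have Ev : str v = rcons (belast y r) (last y r) by rewrite E lastI.
have Hu : (size (belast y r) < z)%N.
  by have := depth_lt v; rewrite depth_str Ev size_rcons; apply: ltnW.
have Hs : (size (rcons (belast y r) (~~ last y r)) < z)%N.
  by have := depth_lt v; rewrite depth_str Ev !size_rcons.
have HkT : (S T <= k)%N by [].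
have IH1 := IH _ (leq_trans (sum1 AT vT Ev Hu Hs) HkT) (@AT1 _ _ _ _ AT vT Ev vmax' Hu Hs).
have AT2 : antichain (T2 T v Hs).
  by move=> a c; rewrite !inT2 => /and3P[_ _ aT] /and3P[_ _ cT]; exact: AT.
have IH2 := IH _ (leq_trans (sum2 vT Ev Hs) HkT) AT2.
rewrite T1n0 in IH1.
have IH2' := weaken IH2.
case: (boolP (mk Hs \in T)) => sT.
  exact: (caseA AT vT Ev vmax' sT IH1 IH2').
exact: (caseB AT vT Ev vmax' sT IH1 IH2').
Qed.

End Main.

End Aux.
Unset Implicit Arguments. Set Strict Implicit.

Theorem mainTheorem5 (R : realFieldType) (z : nat) (delta : R)
  (p : node z -> R) (T : {set node z}) :
  (1 <= z)%N ->
  0 < delta -> delta <= 2^-1 ->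
  (forall v, 0 <= p v) ->
  (forall v, p v <= delta ^+ (2 ^ (z - depth v))) ->
  antichain T ->
  Pr p (fun b => [forall v in T, (Xv b v == 1%N) || (Xv b v == 2%N)])
    <= 4 * 4 ^+ #|T| * delta ^+ (2 * Wt T)
  /\
  ((forall v, v \in T -> is_leaf v) ->
   Pr p (fun b => [forall v in T, (Xv b v == 1%N) || (Xv b v == 2%N)])
    <= (2 * delta) ^+ (2 * #|T|)).
Proof.
Proof.
move=> z1 d0 d1 p0 pb AT.
have E : Pr p (fun b => [forall v in T, (Xv b v == 1%N) || (Xv b v == 2%N)])
       = Pr p (Aux.cov T).
  by rewrite /Pr; apply: eq_bigl => b; apply: eq_forallb_in => v _; exact: Aux.Xv_cov.
have M := Aux.main_ind d0 d1 p0 pb (ltnSn _) AT.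
have X0 : 0 <= 4 ^+ #|T| * delta ^+ (2 * Wt T).
  by apply: mulr_ge0; [exact: Aux.fexp_ge0 | exact: (Aux.dexp_ge0 d0 d1)].
split.
  rewrite E; apply: le_trans M _; case: eqP => [->|_].
    rewrite cards0 Aux.Wt0 !expr0 !mulr1; lra.
  rewrite -!mulrA; apply: ler_wpM2r => //; lra.
move=> Hl; rewrite E; apply: le_trans M _; case: eqP => [->|_].
  by rewrite cards0 muln0 expr0.
have h4 : (2 : R) ^+ 2 = 4 by rewrite expr2; lra.
have -> : (2 * delta) ^+ (2 * #|T|) = 4 ^+ #|T| * delta ^+ (2 * #|T|).
  by rewrite exprMn exprM h4.
rewrite -mulrA.
have Hd : delta ^+ (2 * Wt T) <= delta ^+ (2 * #|T|).
  apply: (Aux.dexp d0 d1); rewrite leq_mul2l; apply/orP; right; exact: Aux.Wt_leaves.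
have H4 := @Aux.fexp_ge0 R #|T|.
have : 4 ^+ #|T| * delta ^+ (2 * Wt T) <= 4 ^+ #|T| * delta ^+ (2 * #|T|).
  by apply: ler_wpM2l.
move: X0; lra.
Qed.
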